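(* There are ring homomorphisms $$\mathrm{B}(\mathcal{Q})\longrightarrow\mathrm{B}(\mathcal{R})\longrightarrow\mathrm{B}(\mathcal{Q})$$ whose composition is the identity of $\mathrm{B}(\mathcal{Q})$.
   Context: A rack is a set $R$ with a binary operation $\rhd$ such that every left multiplication $\ell_a\colon b\mapsto a\rhd b$ is a bijection and $a\rhd(b\rhd c)=(a\rhd b)\rhd(a\rhd c)$ for all $a,b,c$; a quandle is a rack with $a\rhd a=a$ for all $a$. A subrack is a subset $S$ with $\ell_s(S)=S$ for all $s\in S$; a decomposition of $R$ into $S$ and $T$ means $S,T$ are disjoint subracks (possibly empty) with $S\cup T=R$. The Burnside ring of finite racks $\mathrm{B}(\mathcal{R})$ is the abelian group generated by symbols $b(R)$, one for each finite rack $R$, subject to $b(R_1)=b(R_2)$ whenever $R_1\cong R_2$ and $b(R)=b(S)+b(T)$ whenever $R$ decomposes into $S$ and $T$, with ring structure $b(R)b(R')=b(R\times R')$ (cartesian product, componentwise operation) and unit the class of the singleton. The Burnside ring of finite quandles $\mathrm{B}(\mathcal{Q})$ is defined in the same way using only finite quandles. *)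

(* Defs.v *)
From mathcomp Require Import all_boot all_order.
Set Implicit Arguments. Unset Strict Implicit. Unset Printing Implicit Defensive.

(** Every finite rack is isomorphic to one whose carrier is ['I_n]; since the
    Burnside ring identifies isomorphic racks, we take as generators the
    finite racks with carrier ['I_n] (n : nat, n = 0 allowed = empty rack). *)

Record frack := FRack {
  rn : nat;
  rop : 'I_rn -> 'I_rn -> 'I_rn;           (* a |> b = rop a b *)
  rack_bij : forall a, bijective (rop a);
  rack_dist : forall a b c, rop a (rop b c) = rop (rop a b) (rop a c)
}.

Record fquandle := FQuandle {
  qr :> frack;
  q_idem : forall a, @rop qr a a = a
}.

Definition rack_iso (R S : frack) : Prop :=
  exists f : 'I_(rn R) -> 'I_(rn S),
    bijective f /\ forall a b, f (rop a b) = rop (f a) (f b).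

Definition rack_decomp (R S T : frack) : Prop :=
  exists (i : 'I_(rn S) -> 'I_(rn R)) (j : 'I_(rn T) -> 'I_(rn R)),
    [/\ injective i, injective j,
        (forall a b, i (rop a b) = rop (i a) (i b)),
        (forall a b, j (rop a b) = rop (j a) (j b)) &
        (forall x, ((exists a, i a = x) /\ ~ (exists b, j b = x)) \/
                   (~ (exists a, i a = x) /\ (exists b, j b = x)))].

Lemma pt_bij (a : 'I_1) : bijective (fun b : 'I_1 => b).
Proof. by exists id. Qed.
Lemma pt_dist (a b c : 'I_1) : c = c. Proof. by []. Qed.
Definition rack_pt : frack := @FRack 1 (fun _ b => b) pt_bij (fun _ _ _ => erefl).
Definition quandle_pt : fquandle :=
  @FQuandle rack_pt (fun a => erefl).

Section Prod.
Variables R S : frack.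
Let P := ('I_(rn R) * 'I_(rn S))%type.
Definition pop (x y : P) : P := (rop x.1 y.1, rop x.2 y.2).
Definition prod_op (i j : 'I_#|{: P}|) : 'I_#|{: P}| :=
  enum_rank (pop (enum_val i) (enum_val j)).

Lemma prod_bij a : bijective (prod_op a).
Proof.
have [g1 g1K Kg1] := rack_bij (enum_val a).1.
have [g2 g2K Kg2] := rack_bij (enum_val a).2.
pose h (i : 'I_#|{: P}|) : 'I_#|{: P}| :=
  enum_rank (g1 (enum_val i).1, g2 (enum_val i).2).
exists h => i; rewrite /h /prod_op /pop enum_rankK.
- cbn [fst snd]; rewrite g1K g2K -surjective_pairing; exact: enum_valK.
- cbn [fst snd]; rewrite Kg1 Kg2 -surjective_pairing; exact: enum_valK.
Qed.

Lemma prod_dist a b c :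
  prod_op a (prod_op b c) = prod_op (prod_op a b) (prod_op a c).
Proof.
rewrite /prod_op /pop !enum_rankK; cbn [fst snd].
by rewrite (rack_dist (enum_val a).1) (rack_dist (enum_val a).2).
Qed.

Definition rack_prod : frack := @FRack _ prod_op prod_bij prod_dist.
End Prod.

Lemma quandle_prod_idem (Q1 Q2 : fquandle) a :
  @rop (rack_prod Q1 Q2) a a = a.
Proof.
rewrite /rack_prod /rop /prod_op /pop; cbn [fst snd].
by rewrite !q_idem -surjective_pairing enum_valK.
Qed.
Definition quandle_prod (Q1 Q2 : fquandle) : fquandle :=
  @FQuandle (rack_prod Q1 Q2) (@quandle_prod_idem Q1 Q2).

(** Elements: formal Z-linear combinations of generators (terms), modulo the
    congruence generated by the abelian group laws, b(R1)=b(R2) for R1 ~= R2,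
    and b(R)=b(S)+b(T) for decompositions. *)
Section Burnside.
Variable G : Type.
Variable car : G -> frack.
Variable gmul : G -> G -> G.       (* cartesian product *)

Inductive bterm : Type :=
| bGen of G
| bZero
| bAdd of bterm & bterm
| bNeg of bterm.

Inductive beq : bterm -> bterm -> Prop :=
| beq_refl x : beq x x
| beq_sym x y : beq x y -> beq y x
| beq_trans x y z : beq x y -> beq y z -> beq x z
| beq_add x x' y y' : beq x x' -> beq y y' -> beq (bAdd x y) (bAdd x' y')
| beq_neg x x' : beq x x' -> beq (bNeg x) (bNeg x')
| beq_addA x y z : beq (bAdd x (bAdd y z)) (bAdd (bAdd x y) z)
| beq_addC x y : beq (bAdd x y) (bAdd y x)
| beq_add0 x : beq (bAdd bZero x) x
| beq_addN x : beq (bAdd (bNeg x) x) bZero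
| beq_iso r s : rack_iso (car r) (car s) -> beq (bGen r) (bGen s)
| beq_decomp r s t : rack_decomp (car r) (car s) (car t) ->
    beq (bGen r) (bAdd (bGen s) (bGen t)).

Fixpoint bmul (x y : bterm) : bterm :=
  match x with
  | bGen g =>
      (fix bmulg (y : bterm) : bterm :=
         match y with
         | bGen h => bGen (gmul g h)
         | bZero => bZero
         | bAdd y1 y2 => bAdd (bmulg y1) (bmulg y2)
         | bNeg y1 => bNeg (bmulg y1)
         end) y
  | bZero => bZero
  | bAdd x1 x2 => bAdd (bmul x1 y) (bmul x2 y)
  | bNeg x1 => bNeg (bmul x1 y)
  end.
End Burnside.

Definition BR := bterm frack.
Definition BR_eq : BR -> BR -> Prop := beq (fun r : frack => r).
Definition BR_add : BR -> BR -> BR := @bAdd frack.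
Definition BR_mul : BR -> BR -> BR := bmul rack_prod.
Definition BR_one : BR := bGen rack_pt.

Definition BQ := bterm fquandle.
Definition BQ_eq : BQ -> BQ -> Prop := beq (fun q : fquandle => qr q).
Definition BQ_add : BQ -> BQ -> BQ := @bAdd fquandle.
Definition BQ_mul : BQ -> BQ -> BQ := bmul quandle_prod.
Definition BQ_one : BQ := bGen quandle_pt.

Definition ring_hom_on (A B : Type) (eqA : A -> A -> Prop) (eqB : B -> B -> Prop)
  (addA : A -> A -> A) (addB : B -> B -> B) (mulA : A -> A -> A) (mulB : B -> B -> B)
  (oneA : A) (oneB : B) (f : A -> B) : Prop :=
  [/\ (forall x y, eqA x y -> eqB (f x) (f y)),
      (forall x y, eqB (f (addA x y)) (addB (f x) (f y))),
      (forall x y, eqB (f (mulA x y)) (mulB (f x) (f y))) &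
      eqB (f oneA) oneB].

(* Main.v *)
Require Import Defs.
From mathcomp Require Import all_boot all_order.
Set Implicit Arguments. Unset Strict Implicit. Unset Printing Implicit Defensive.

Definition rmor (X Y : frack) (f : 'I_(rn X) -> 'I_(rn Y)) :=
  forall a b, f (rop a b) = rop (f a) (f b).

Section Fix.
Variable R : frack.
Definition fixp (a : 'I_(rn R)) : bool := rop a a == a.
Definition FT := {a : 'I_(rn R) | fixp a}.
Lemma fix_closed a b : fixp b -> fixp (rop a b).
Proof. by rewrite /fixp -rack_dist => /eqP ->. Qed.
Definition fop (x y : FT) : FT := exist _ (rop (val x) (val y)) (fix_closed (val x) (valP y)).
Definition qop (i j : 'I_#|{: FT}|) : 'I_#|{: FT}| := enum_rank (fop (enum_val i) (enum_val j)).
Lemma qop_inj a : injective (qop a).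
Proof.
move=> i j /enum_rank_inj /(congr1 val) /= H.
apply: enum_val_inj; apply: val_inj.
have [g _ gK] := rack_bij (val (enum_val a)).
by move/bij_inj: (rack_bij (val (enum_val a))); apply.
Qed.
Lemma qop_bij a : bijective (qop a).
Proof. exact: (@injF_bij (ordinal #|{: FT}|) _ (@qop_inj a)). Qed.
Lemma qop_dist a b c : qop a (qop b c) = qop (qop a b) (qop a c).
Proof. rewrite /qop !enum_rankK; congr enum_rank; apply: val_inj => /=; exact: rack_dist. Qed.
Definition fixr : frack := @FRack _ qop qop_bij qop_dist.
Lemma qop_idem a : @rop fixr a a = a.
Proof.
rewrite /= /qop; have -> : fop (enum_val a) (enum_val a) = enum_val a.
  by apply: val_inj => /=; apply/eqP; exact: (valP (enum_val a)).
exact: enum_valK.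
Qed.
Definition fixq : fquandle := @FQuandle fixr qop_idem.
Definition emb (k : 'I_(rn fixq)) : 'I_(rn R) := val (enum_val k).
Lemma emb_inj : injective emb.
Proof. by move=> i j /val_inj /enum_val_inj. Qed.
Lemma emb_mor : rmor emb.
Proof. by move=> a b; rewrite /emb /= /qop enum_rankK. Qed.
Lemma emb_img y : (exists k, emb k = y) <-> fixp y.
Proof.
split; first by case=> k <-; exact: (valP (enum_val k)).
move=> Hy; exists (enum_rank (exist _ y Hy : FT)); by rewrite /emb enum_rankK.
Qed.
End Fix.

Lemma bij_of (X Y : finType) (f : X -> Y) : injective f -> (forall y, exists x, f x = y) -> bijective f.
Proof.
move=> fi fs.
have H y : exists x, f x == y by case: (fs y) => x <-; exists x.
exists (fun y => xchoose (H y)) => [x|y]; last exact/eqP/(xchooseP (H y)).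
by apply: fi; apply/eqP; exact: (xchooseP (H (f x))).
Qed.

Lemma lift_mor (A B RA RB : frack) (eA : 'I_(rn A) -> 'I_(rn RA)) (eB : 'I_(rn B) -> 'I_(rn RB))
  (phi : 'I_(rn RA) -> 'I_(rn RB)) :
  injective eB -> rmor eA -> rmor eB -> rmor phi ->
  (forall x, exists y, eB y = phi (eA x)) ->
  exists psi, rmor psi /\ forall x, eB (psi x) = phi (eA x).
Proof.
move=> eBi mA mB mphi H.
have H' x : exists y, eB y == phi (eA x) by case: (H x) => y Hy; exists y; rewrite Hy.
pose psi x := xchoose (H' x).
have E x : eB (psi x) = phi (eA x) by apply/eqP; exact: (xchooseP (H' x)).
exists psi; split=> // a b; apply: eBi; by rewrite mB !E mA mphi.
Qed.

Lemma iso_of (A B RA RB : frack) (eA : 'I_(rn A) -> 'I_(rn RA)) (eB : 'I_(rn B) -> 'I_(rn RB))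
  (phi : 'I_(rn RA) -> 'I_(rn RB)) :
  injective eA -> injective eB -> rmor eA -> rmor eB -> rmor phi -> injective phi ->
  (forall x, exists y, eB y = phi (eA x)) ->
  (forall y, exists x, eB y = phi (eA x)) -> rack_iso A B.
Proof.
move=> eAi eBi mA mB mphi phii H1 H2.
have [psi [mpsi E]] := lift_mor eBi mA mB mphi H1.
exists psi; split=> //; apply: bij_of.
  by move=> x x' /(congr1 eB); rewrite !E => /phii /eAi.
by move=> y; case: (H2 y) => x Hx; exists x; apply: eBi; rewrite E.
Qed.

Lemma fixp_mor (X Y : frack) (phi : 'I_(rn X) -> 'I_(rn Y)) a :
  rmor phi -> fixp a -> fixp (phi a).
Proof. by move=> m; rewrite /fixp -m => /eqP ->. Qed.
Lemma fixp_mor_inv (X Y : frack) (phi : 'I_(rn X) -> 'I_(rn Y)) a :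
  rmor phi -> injective phi -> fixp (phi a) -> fixp a.
Proof. by move=> m i; rewrite /fixp -m (inj_eq i). Qed.

Lemma fix_iso R S : rack_iso R S -> rack_iso (fixq R) (fixq S).
Proof.
case=> phi [bphi mphi].
have phii := bij_inj bphi.
apply: (@iso_of _ _ R S (@emb R) (@emb S) phi) => //; try exact: emb_inj; try exact: emb_mor.
  move=> x; apply/emb_img; apply: fixp_mor => //; apply/emb_img; by exists x.
move=> y; case: bphi => g gK Kg.
have : fixp (g (emb y)).
  apply: (fixp_mor_inv mphi phii); rewrite Kg; apply/emb_img; by exists y.
by case/emb_img => x Hx; exists x; rewrite Hx Kg.
Qed.

Lemma fix_decomp R S T : rack_decomp R S T -> rack_decomp (fixq R) (fixq S) (fixq T).
Proof.
case=> i [j [ii ij mi mj cov]].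
have [pi [mpi Ei]] : exists psi, rmor psi /\ forall x, emb (psi x) = i (@emb S x).
  apply: lift_mor => //; try exact: emb_inj; try exact: emb_mor.
  move=> x; apply/emb_img; apply: fixp_mor => //; apply/emb_img; by exists x.
have [pj [mpj Ej]] : exists psi, rmor psi /\ forall x, emb (psi x) = j (@emb T x).
  apply: lift_mor => //; try exact: emb_inj; try exact: emb_mor.
  move=> x; apply/emb_img; apply: fixp_mor => //; apply/emb_img; by exists x.
exists pi, pj; split=> //.
- by move=> x y /(congr1 (@emb R)); rewrite !Ei => /ii /emb_inj.
- by move=> x y /(congr1 (@emb R)); rewrite !Ej => /ij /emb_inj.
move=> x.
have fx : fixp (emb x) by apply/emb_img; exists x.
have Hi : (exists a, i a = emb x) -> exists a, pi a = x.
  case=> a Ha.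
  have : fixp a by apply: (fixp_mor_inv mi ii); rewrite Ha.
  case/emb_img => a' Ha'; exists a'; apply: emb_inj; by rewrite Ei Ha'.
have Hj : (exists a, j a = emb x) -> exists a, pj a = x.
  case=> a Ha.
  have : fixp a by apply: (fixp_mor_inv mj ij); rewrite Ha.
  case/emb_img => a' Ha'; exists a'; apply: emb_inj; by rewrite Ej Ha'.
have Ni : (exists a, pi a = x) -> exists a, i a = emb x.
  by case=> a <-; exists (emb a); rewrite Ei.
have Nj : (exists a, pj a = x) -> exists a, j a = emb x.
  by case=> a <-; exists (emb a); rewrite Ej.
case: (cov (emb x)) => [[h1 h2]|[h1 h2]].
  by left; split; [exact: Hi | move/Nj].
by right; split; [move/Ni | exact: Hj].
Qed.

Definition pmap (X1 X2 Y1 Y2 : frack) (f1 : 'I_(rn X1) -> 'I_(rn Y1)) (f2 : 'I_(rn X2) -> 'I_(rn Y2))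
  (k : 'I_(rn (rack_prod X1 X2))) : 'I_(rn (rack_prod Y1 Y2)) :=
  enum_rank (f1 (enum_val k).1, f2 (enum_val k).2).

Lemma pmap_mor X1 X2 Y1 Y2 f1 f2 : rmor f1 -> rmor f2 -> rmor (@pmap X1 X2 Y1 Y2 f1 f2).
Proof.
move=> m1 m2 a b; rewrite /pmap /= /prod_op /pop !enum_rankK /=.
by rewrite m1 m2.
Qed.

Lemma pmap_inj X1 X2 Y1 Y2 f1 f2 : injective f1 -> injective f2 -> injective (@pmap X1 X2 Y1 Y2 f1 f2).
Proof.
move=> i1 i2 a b /enum_rank_inj [/i1 H1 /i2 H2]; apply: enum_val_inj.
by rewrite [enum_val a]surjective_pairing [enum_val b]surjective_pairing H1 H2.
Qed.

Lemma fixp_prod R S k :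
  @fixp (rack_prod R S) k = fixp (enum_val k).1 && fixp (enum_val k).2.
Proof.
rewrite /fixp /= /prod_op /pop -[X in _ == X](enum_valK k) (inj_eq enum_rank_inj).
by case: (enum_val k) => a b /=; rewrite xpair_eqE.
Qed.

Lemma fix_prod R S : rack_iso (fixq (rack_prod R S)) (quandle_prod (fixq R) (fixq S)).
Proof.
apply: (@iso_of _ _ (rack_prod R S) (rack_prod R S) (@emb _) (pmap (@emb R) (@emb S)) id) => //;
  try exact: emb_inj; try exact: emb_mor.
- apply: pmap_inj; exact: emb_inj.
- apply: pmap_mor; exact: emb_mor.
- move=> x; have : fixp (emb x) by apply/emb_img; exists x.
  rewrite fixp_prod => /andP [/emb_img [a Ha] /emb_img [b Hb]].
  exists (enum_rank ((a, b) : 'I_(rn (fixq R)) * 'I_(rn (fixq S)))).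
  by rewrite /pmap enum_rankK /= Ha Hb -surjective_pairing enum_valK.
- move=> y.
  have : fixp (pmap (@emb R) (@emb S) y).
    by rewrite fixp_prod /pmap enum_rankK /=; apply/andP; split; apply/emb_img; eexists.
  by case/emb_img => x Hx; exists x.
Qed.

Lemma fix_pt : rack_iso (fixq rack_pt) quandle_pt.
Proof.
apply: (@iso_of _ _ rack_pt rack_pt (@emb _) id id) => //; try exact: emb_inj; try exact: emb_mor.
- by move=> x; exists (emb x).
- by move=> y; case: (proj2 (emb_img y)) => [|x <-]; [rewrite /fixp /= eqxx | exists x].
Qed.

Lemma fix_q (q : fquandle) : rack_iso (fixq q) q.
Proof.
apply: (@iso_of _ _ q q (@emb _) id id) => //; try exact: emb_inj; try exact: emb_mor.
- by move=> x; exists (emb x).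
- by move=> y; case: (proj2 (emb_img y)) => [|x <-]; [rewrite /fixp q_idem eqxx | exists x].
Qed.

Fixpoint bmap (G G' : Type) (h : G -> G') (x : bterm G) : bterm G' :=
  match x with
  | bGen g => bGen (h g)
  | bZero => bZero G'
  | bAdd x1 x2 => bAdd (bmap h x1) (bmap h x2)
  | bNeg x1 => bNeg (bmap h x1)
  end.

Lemma bmap_beq (G G' : Type) (car : G -> frack) (car' : G' -> frack) (h : G -> G') :
  (forall r s, rack_iso (car r) (car s) -> rack_iso (car' (h r)) (car' (h s))) ->
  (forall r s t, rack_decomp (car r) (car s) (car t) ->
     rack_decomp (car' (h r)) (car' (h s)) (car' (h t))) ->
  forall x y, beq car x y -> beq car' (bmap h x) (bmap h y).
Proof.
move=> Hi Hd x y; elim=> /=; intros; try (econstructor; eauto; fail).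
Qed.

Lemma bmap_mul (G G' : Type) (car' : G' -> frack) (gm : G -> G -> G) (gm' : G' -> G' -> G')
  (h : G -> G') :
  (forall a b, beq car' (bGen (h (gm a b))) (bGen (gm' (h a) (h b)))) ->
  forall x y, beq car' (bmap h (bmul gm x y)) (bmul gm' (bmap h x) (bmap h y)).
Proof.
move=> Hg; elim=> [a||x1 IH1 x2 IH2|x1 IH1] y /=; try (constructor; eauto; fail).
elim: y => [b||y1 IH1 y2 IH2|y1 IH1] /=; try (constructor; eauto; fail).
exact: Hg.
Qed.

Theorem proposition3p18 :
  exists (f : BQ -> BR) (g : BR -> BQ),
    [/\ ring_hom_on BQ_eq BR_eq BQ_add BR_add BQ_mul BR_mul BQ_one BR_one f,
        ring_hom_on BR_eq BQ_eq BR_add BQ_add BR_mul BQ_mul BR_one BQ_one g &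
        forall x : BQ, BQ_eq (g (f x)) x].
Proof.
exists (bmap (fun q : fquandle => qr q)), (bmap fixq); split.
- split.
  + by apply: bmap_beq.
  + by move=> x y; apply: beq_refl.
  + by move=> x y; apply: bmap_mul => a b; apply: beq_refl.
  + exact: beq_refl.
- split.
  + apply: bmap_beq; [exact: fix_iso | exact: fix_decomp].
  + by move=> x y; apply: beq_refl.
  + by move=> x y; apply: bmap_mul => a b; apply: beq_iso; exact: fix_prod.
  + by apply: beq_iso; exact: fix_pt.
- elim=> [q||x1 IH1 x2 IH2|x1 IH1] /=.
  + by apply: beq_iso; exact: fix_q.
  + exact: beq_refl.
  + exact: beq_add.
  + exact: beq_neg.
Qed.
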